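(* If $n\ge 3$ is odd, the free group $F_n$ has no $\Delta$-primitive elements.
   Context: $F_n$ is free with basis $x_1,\dots,x_n$; $\mathbb{Z}F_n$ is its integral group ring with augmentation ideal $\Delta$ (kernel of $\varepsilon:\mathbb{Z}F_n\to\mathbb{Z}$). For $g\in F_n$, the Fox derivatives $d_i(g)\in\mathbb{Z}F_n$ are the unique elements with $g-1=\sum_{i=1}^n d_i(g)(x_i-1)$. An element $u\in F_n$ is $\Delta$-primitive if $d_1(u),\dots,d_n(u)$ generate $\Delta$ as a right ideal of $\mathbb{Z}F_n$. *)

(* Defs.v *)
From HB Require Import structures.
From mathcomp Require Import all_boot all_order all_algebra.
Set Implicit Arguments. Unset Strict Implicit. Unset Printing Implicit Defensive.
Import GRing.Theory Num.Theory.
Local Open Scope ring_scope.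

(* A letter of F_n: (i, false) is x_i, (i, true) is x_i^{-1}. *)
Definition letter (n : nat) := ('I_n * bool)%type.
Definition word (n : nat) := seq (letter n).

(* Free reduction (right-to-left stack); the elements of F_n are the
   reduced words, and reduce w is the element represented by w. *)
Definition cancels n (l h : letter n) : bool := (l.1 == h.1) && (l.2 != h.2).
Definition reduce n (w : word n) : word n :=
  foldr (fun l acc => match acc with
                      | h :: t => if cancels l h then t else l :: acc
                      | [::] => [:: l] end) [::] w.

(* Elements of Z F_n are represented by formal sums sum_k c_k w_k. *)
Definition ZF (n : nat) := seq (int * word n).
Definition coef n (a : ZF n) (g : word n) : int :=
  \sum_(p <- a | reduce p.2 == g) p.1.
Definition eqZF n (a b : ZF n) : Prop := forall g : word n, coef a g = coef b g.
Definition addZF n (a b : ZF n) : ZF n := a ++ b.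
Definition mulZF n (a b : ZF n) : ZF n :=
  [seq (p.1 * q.1, p.2 ++ q.2) | p <- a, q <- b].
Definition sumZF n (f : 'I_n -> ZF n) : ZF n := flatten [seq f i | i <- enum 'I_n].
Definition augm n (a : ZF n) : int := \sum_(p <- a) p.1.
Definition inDelta n (a : ZF n) : Prop := augm a = 0.

(* Fox derivative d_i via the standard formula
   d_i(w) = sum over occurrences: +prefix before x_i, -prefix up to and
   including x_i^{-1}. *)
Fixpoint fox_aux n (i : 'I_n) (pre : word n) (w : word n) : ZF n :=
  match w with
  | [::] => [::]
  | l :: t =>
      (if l.1 == i then (if l.2 then [:: (-1, rcons pre l)] else [:: (1, pre)])
       else [::]) ++ fox_aux i (rcons pre l) t
  end.
Definition fox n (i : 'I_n) (w : word n) : ZF n := fox_aux i [::] w.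

(* u is Delta-primitive: the right ideal generated by d_1(u),...,d_n(u)
   equals Delta. *)
Definition delta_primitive n (u : word n) : Prop :=
  forall a : ZF n,
    inDelta a <-> exists r : 'I_n -> ZF n, eqZF a (sumZF (fun i => mulZF (fox i u) (r i))).

(* Main.v *)
Require Import Defs.
From mathcomp Require Import all_boot all_order all_algebra.
From mathcomp Require Import ring zify.
Set Implicit Arguments. Unset Strict Implicit. Unset Printing Implicit Defensive.
Import GRing.Theory Num.Theory.
Local Open Scope ring_scope.

Definition sgn n (k : 'I_n) (l : letter n) : int :=
  if l.1 == k then (if l.2 then -1 else 1) else 0.
Definition ab n (k : 'I_n) (w : word n) : int := \sum_(l <- w) sgn k l.
Definition Lf n (f : word n -> int) (a : ZF n) : int := \sum_(p <- a) p.1 * f p.2.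

Lemma ab_cat n k (w1 w2 : word n) : ab k (w1 ++ w2) = ab k w1 + ab k w2.
Proof. by rewrite /ab big_cat. Qed.

Lemma ab_cons n k (l : letter n) w : ab k (l :: w) = sgn k l + ab k w.
Proof. by rewrite /ab big_cons. Qed.

Lemma ab_reduce n k (w : word n) : ab k (reduce w) = ab k w.
Proof.
elim: w => [|l w IH] //; rewrite /reduce /= -/(reduce w).
rewrite ab_cons -IH.
case E: (reduce w) => [|h t] /=; first by rewrite ab_cons.
case C: (cancels l h); last by rewrite ab_cons.
rewrite ab_cons addrA.
move: C; rewrite /cancels /sgn => /andP[/eqP -> ].
case: (h.1 == k); case: l.2; case: h.2 => //= _; ring.
Qed.

Lemma coef_cons n (p : int * word n) a g :
  coef (p :: a) g = (if reduce p.2 == g then p.1 else 0) + coef a g.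
Proof. by rewrite /coef big_cons; case: ifP => _ //; rewrite add0r. Qed.

Lemma Lf_coef n (f : word n -> int) (a : ZF n) (S : seq (word n)) :
  (forall w, f (reduce w) = f w) -> uniq S -> (forall p, p \in a -> reduce p.2 \in S) ->
  Lf f a = \sum_(g <- S) coef a g * f g.
Proof.
move=> Hf US; elim: a => [|p a IH] HS.
  rewrite /Lf big_nil; symmetry; apply: big1 => g _.
  by rewrite /coef big_nil mul0r.
rewrite /Lf big_cons -/(Lf f a) IH; last by move=> q Hq; apply: HS; rewrite inE Hq orbT.
have Hp : reduce p.2 \in S by apply: HS; rewrite inE eqxx.
symmetry; under eq_bigr => g _ do rewrite coef_cons mulrDl.
rewrite big_split /=; congr (_ + _).
rewrite (bigD1_seq (reduce p.2)) //= eqxx big1 ?addr0 ?Hf //.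
by move=> g /negPf; rewrite eq_sym => ->; rewrite mul0r.
Qed.

Lemma Lf_eq n (f : word n -> int) (a b : ZF n) :
  (forall w, f (reduce w) = f w) -> eqZF a b -> Lf f a = Lf f b.
Proof.
move=> Hf E.
set S := undup [seq reduce p.2 | p <- a ++ b].
have US : uniq S by apply: undup_uniq.
rewrite (Lf_coef Hf US) ?(Lf_coef Hf US).
- by apply: eq_bigr => g _; rewrite E.
- by move=> p Hp; rewrite mem_undup; apply/mapP; exists p => //; rewrite mem_cat Hp orbT.
- by move=> p Hp; rewrite mem_undup; apply/mapP; exists p => //; rewrite mem_cat Hp.
Qed.

Lemma Lf_cat n f (a b : ZF n) : Lf f (a ++ b) = Lf f a + Lf f b.
Proof. by rewrite /Lf big_cat. Qed.

Lemma augmE n (a : ZF n) : augm a = Lf (fun _ => 1) a.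
Proof. by rewrite /augm /Lf; apply: eq_bigr => p _; rewrite mulr1. Qed.

Lemma Lf_mul n k (a b : ZF n) :
  Lf (ab k) (mulZF a b) = Lf (ab k) a * augm b + augm a * Lf (ab k) b.
Proof.
rewrite /Lf /augm /mulZF big_allpairs_dep /= !big_distrl -big_split /=.
apply: eq_bigr => p _; rewrite !big_distrr -big_split /=.
apply: eq_bigr => q _ /=; rewrite ab_cat -big_distrr -/(ab k p.2).
by transitivity ((p.1 * ab k p.2) * q.1 + p.1 * (q.1 * ab k q.2)); first ring.
Qed.

Lemma augm_mul n (a b : ZF n) : augm (mulZF a b) = augm a * augm b.
Proof.
rewrite /augm /mulZF big_allpairs_dep /= big_distrl /=.
by apply: eq_bigr => p _; rewrite big_distrr.
Qed.

Lemma Lf_sum n f (r : 'I_n -> ZF n) : Lf f (sumZF r) = \sum_(i < n) Lf f (r i).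
Proof. by rewrite /Lf /sumZF big_flatten big_map big_enum. Qed.

Lemma augm_cat n (a b : ZF n) : augm (a ++ b) = augm a + augm b.
Proof. by rewrite /augm big_cat. Qed.

Lemma fox_aux_cons n (i : 'I_n) pre l t : fox_aux i pre (l :: t) =
  (if l.1 == i then (if l.2 then [:: (-1, rcons pre l)] else [:: (1, pre)])
       else [::]) ++ fox_aux i (rcons pre l) t.
Proof. by []. Qed.

Lemma augm_fox_aux n (i : 'I_n) pre w : augm (fox_aux i pre w) = ab i w.
Proof.
elim: w pre => [|l t IH] pre; first by rewrite /augm big_nil /ab big_nil.
rewrite fox_aux_cons augm_cat IH ab_cons /sgn.
case: (l.1 == i); case: l.2; rewrite /augm /= ?big_cons ?big_nil /= ?addr0 //.
Qed.

Lemma Lf_nil n f : Lf f ([::] : ZF n) = 0.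
Proof. by rewrite /Lf big_nil. Qed.
Lemma Lf1 n f (p : int * word n) : Lf f [:: p] = p.1 * f p.2.
Proof. by rewrite /Lf big_cons big_nil addr0. Qed.
Lemma ab_nil n k : ab k ([::] : word n) = 0.
Proof. by rewrite /ab big_nil. Qed.
Lemma ab_rcons n k (w : word n) l : ab k (rcons w l) = ab k w + sgn k l.
Proof. by rewrite -cats1 ab_cat ab_cons ab_nil addr0. Qed.
Lemma sgn_i n (i : 'I_n) l : sgn i l = if l.1 == i then (if l.2 then -1 else 1) else 0.
Proof. by []. Qed.

Lemma Lf_fox_aux n (k i : 'I_n) pre w :
  Lf (ab k) (fox_aux i pre w) = ab k pre * ab i w + Lf (ab k) (fox_aux i [::] w).
Proof.
elim: w pre => [|l t IH] pre; first by rewrite /= Lf_nil ab_nil mulr0 addr0.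
rewrite !fox_aux_cons !Lf_cat IH [Lf _ (fox_aux i (rcons [::] l) t)]IH !ab_rcons ab_nil
  ab_cons [sgn i l]sgn_i.
case: (l.1 == i); case: l.2; rewrite ?Lf_nil ?Lf1 /= ?ab_rcons ?ab_nil ?ab_cons ?ab_nil; ring.
Qed.

Lemma fox_sym n (k i : 'I_n) w :
  Lf (ab k) (fox i w) + Lf (ab i) (fox k w) =
  ab k w * ab i w - (if k == i then ab i w else 0).
Proof.
elim: w => [|l t IH]; first by rewrite /fox /= !Lf_nil !ab_nil; case: (k == i); ring.
rewrite /fox !fox_aux_cons !Lf_cat.
rewrite (Lf_fox_aux k i (rcons [::] l)) (Lf_fox_aux i k (rcons [::] l)) -/(fox i t) -/(fox k t).
set G1 := Lf (ab k) (fox i t).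
have -> : Lf (ab i) (fox k t) = ab k t * ab i t - (if k == i then ab i t else 0) - G1.
  by rewrite -IH; ring.
rewrite !ab_rcons !ab_nil !ab_cons.
case: l => j b /=; rewrite !sgn_i /=.
case: (eqVneq j i) => [->|Hji].
  case: (eqVneq i k) => [<-|Hik].
    by rewrite ?eqxx; case: b; rewrite ?Lf1 ?Lf_nil /= ?ab_rcons ?ab_cons ?ab_nil ?sgn_i /= ?eqxx; ring.
  have Hki : k != i by rewrite eq_sym.
  rewrite ?(negbTE Hik) ?(negbTE Hki).
  by case: b; rewrite ?Lf1 ?Lf_nil /= ?ab_rcons ?ab_cons ?ab_nil ?sgn_i /= ?eqxx ?(negbTE Hik) ?(negbTE Hki); ring.
rewrite ?(negbTE Hji).
case: (eqVneq j k) => [<-|Hjk].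
  have Hij : i != j by rewrite eq_sym.
  rewrite ?(negbTE Hji) ?(negbTE Hij).
  by case: b; rewrite ?Lf1 ?Lf_nil /= ?ab_rcons ?ab_cons ?ab_nil ?sgn_i /= ?eqxx ?(negbTE Hji) ?(negbTE Hij); ring.
rewrite ?(negbTE Hjk) ?Lf_nil.
by case: (k == i); ring.
Qed.

Lemma coef_sum n (F : 'I_n -> ZF n) g : coef (sumZF F) g = \sum_(j < n) coef (F j) g.
Proof. by rewrite /coef /sumZF big_flatten big_map big_enum. Qed.

Lemma coef_mul1 n (a : ZF n) g : coef (mulZF a [:: (1, [::])]) g = coef a g.
Proof.
rewrite /coef /mulZF big_mkcond big_allpairs_dep /= [RHS]big_mkcond.
by apply: eq_bigr => p _; rewrite big_cons big_nil /= cats0 mulr1 addr0.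
Qed.

Lemma coef_mul0 n (a : ZF n) g : coef (mulZF a [::]) g = 0.
Proof.
by rewrite /coef big_mkcond big_allpairs_dep big1 // => p _; rewrite big_nil.
Qed.

Theorem corollary1p5 (n : nat) : (3 <= n)%N -> odd n ->
  forall u : word n, ~ delta_primitive u.
Proof.
move=> _ nodd u Hdp.
have He : forall i, ab i u = 0.
  move=> i; rewrite -(augm_fox_aux i [::] u) -/(fox i u).
  apply: (proj2 (Hdp (fox i u))).
  exists (fun j => if j == i then [:: (1, [::])] else [::]) => g.
  rewrite coef_sum (bigD1 i) //= eqxx coef_mul1 big1 ?addr0 // => j /negPf ->.
  exact: coef_mul0.
have Hr : forall j : 'I_n, exists r : 'I_n -> ZF n,
    eqZF [:: (1, [:: (j, false)]); (-1, [::])] (sumZF (fun i => mulZF (fox i u) (r i))).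
  move=> j; apply/(Hdp _).1.
  by rewrite /inDelta /augm !big_cons big_nil.
have [r Hr'] := fin_all_exists Hr.
pose V := \matrix_(k < n, i < n) Lf (ab k) (fox i u).
pose R := \matrix_(i < n, j < n) augm (r j i).
have VR : V *m R = 1%:M.
  apply/matrixP => k j; rewrite !mxE.
  have := Lf_eq (ab_reduce k) (Hr' j).
  rewrite Lf_sum [Lf _ [:: _; _]]/Lf !big_cons big_nil /= ab_cons !ab_nil /sgn /=.
  rewrite mul1r mulr0 !addr0 => E.
  transitivity (if j == k then 1 else 0 : int); last by rewrite eq_sym; case: (k == j).
  rewrite E; apply: eq_bigr => i _; rewrite !mxE Lf_mul augm_fox_aux He; ring.
have VT : V^T = - V.
  apply/matrixP => k i; rewrite !mxE.
  apply/eqP; rewrite -subr_eq0 opprK.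
  by rewrite fox_sym !He mul0r; case: (i == k); rewrite subr0.
have D0 : \det V = 0.
  have := det_tr V; rewrite VT -scaleN1r detZ -signr_odd nodd expr1 mulN1r.
  move=> H; have : \det V + \det V = 0 by rewrite -{1}H addNr.
  by move/eqP; rewrite -mulr2n mulrn_eq0 /= => /eqP.
have := det_mulmx V R; rewrite VR det1 D0 mul0r.
by move/eqP; rewrite oner_eq0.
Qed.
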